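(* Let $A,B\in\mathbb{R}^{n\times n}$ be symmetric, $a,b\in\mathbb{R}^n$, $c,d\in\mathbb{R}$, $\alpha\le\beta$ real, $f(x)=x^TAx+2a^Tx+c$, $h(x)=x^TBx+2b^Tx+d$. Suppose $B\neq 0$ and there exist $\widehat{x}\in\mathbb{R}^n$ and a symmetric $\widehat{X}$ with $\widehat{X}-\widehat{x}\widehat{x}^T$ positive definite and $\alpha<B\bullet\widehat{X}+2b^T\widehat{x}+d<\beta$. Then the problem $\inf\{f(x): \alpha\le h(x)\le\beta\}$ is bounded below (i.e. has optimal value $>-\infty$) if and only if there exist $\mu,s\in\mathbb{R}$ with $\begin{bmatrix}A+\mu B & a+\mu b\\ a^T+\mu b^T & s\end{bmatrix}\succeq 0$ (i.e. the Lagrangian dual problem $\sup\{c+\mu d-\mu_-\beta+\mu_+\alpha-s : \mu,s\in\mathbb{R},\ \begin{bmatrix}A+\mu B & a+\mu b\\ a^T+\mu b^T & s\end{bmatrix}\succeq 0\}$, with $\mu_+=\max\{\mu,0\}$, $\mu_-=-\min\{\mu,0\}$, is feasible).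
   Context: $M\succeq 0$ means $M$ is positive semidefinite; $M\bullet N=\sum_{i,j}m_{ij}n_{ij}$. *)

(* Defs.v *)
From mathcomp Require Import all_boot all_order all_algebra.
From mathcomp Require Import reals.
Set Implicit Arguments. Unset Strict Implicit. Unset Printing Implicit Defensive.
Import Order.TTheory GRing.Theory Num.Theory.
Local Open Scope ring_scope.

Definition sc (R : ringType) (M : 'M[R]_1) : R := M ord0 ord0.

Definition psd (R : realType) (n : nat) (M : 'M[R]_n) : Prop :=
  M^T = M /\ forall v : 'cV[R]_n, 0 <= sc (v^T *m M *m v).

Definition pd (R : realType) (n : nat) (M : 'M[R]_n) : Prop :=
  M^T = M /\ forall v : 'cV[R]_n, v != 0 -> 0 < sc (v^T *m M *m v).

Definition frob (R : ringType) (m n : nat) (M N : 'M[R]_(m, n)) : R :=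
  \sum_(i < m) \sum_(j < n) M i j * N i j.

Definition quadf (R : realType) (n : nat) (A : 'M[R]_n) (a : 'cV[R]_n) (c : R)
  (x : 'cV[R]_n) : R :=
  sc (x^T *m A *m x) + 2 * sc (a^T *m x) + c.

Definition dualmx (R : realType) (n : nat) (A B : 'M[R]_n) (a b : 'cV[R]_n)
  (mu s : R) : 'M[R]_(n + 1) :=
  block_mx (A + mu *: B) (a + mu *: b) (a^T + mu *: b^T) (s%:M).

(* Main.v *)
Require Import Defs.
From mathcomp Require Import all_boot all_order all_algebra.
From mathcomp Require Import reals.
From mathcomp Require Import classical_sets.
From mathcomp Require Import ring lra.
From Stdlib Require Import Classical.
Set Implicit Arguments. Unset Strict Implicit. Unset Printing Implicit Defensive.
Import Order.TTheory GRing.Theory Num.Theory.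
Local Open Scope ring_scope.


Section Aux.
Variable R : realType.
Implicit Types (N : nat).

Definition bl N (M : 'M[R]_N) (u v : 'cV[R]_N) : R := sc (u^T *m M *m v).
Definition lin N (a x : 'cV[R]_N) : R := sc (a^T *m x).

Lemma scD (X Y : 'M[R]_1) : sc (X + Y) = sc X + sc Y.
Proof. by rewrite /sc mxE. Qed.
Lemma scZ (k : R) (X : 'M[R]_1) : sc (k *: X) = k * sc X.
Proof. by rewrite /sc mxE. Qed.
Lemma scT (X : 'M[R]_1) : sc (X^T) = sc X.
Proof. by rewrite /sc mxE. Qed.
Lemma scN (X : 'M[R]_1) : sc (- X) = - sc X.
Proof. by rewrite /sc mxE. Qed.

Lemma blDl N (M : 'M[R]_N) u v w : bl M (u + v) w = bl M u w + bl M v w.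
Proof. by rewrite /bl linearD /= !mulmxDl scD. Qed.
Lemma blDr N (M : 'M[R]_N) u v w : bl M w (u + v) = bl M w u + bl M w v.
Proof. by rewrite /bl !mulmxDr scD. Qed.
Lemma blZl N (M : 'M[R]_N) k u w : bl M (k *: u) w = k * bl M u w.
Proof. by rewrite /bl linearZ /= -!scalemxAl scZ. Qed.
Lemma blZr N (M : 'M[R]_N) k u w : bl M w (k *: u) = k * bl M w u.
Proof. by rewrite /bl -!scalemxAr scZ. Qed.
Lemma bl_sym N (M : 'M[R]_N) u v : M^T = M -> bl M u v = bl M v u.
Proof.
move=> hM; rewrite /bl -scT !trmx_mul trmxK hM mulmxA //.
Qed.
Lemma linD N (a x y : 'cV[R]_N) : lin a (x + y) = lin a x + lin a y.
Proof. by rewrite /lin mulmxDr scD. Qed.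
Lemma linZ N (a x : 'cV[R]_N) k : lin a (k *: x) = k * lin a x.
Proof. by rewrite /lin -scalemxAr scZ. Qed.
Lemma blN N (M : 'M[R]_N) u w : bl M (- u) w = - bl M u w.
Proof. by rewrite -scaleN1r blZl mulN1r. Qed.

Lemma quadfE N (M : 'M[R]_N) m c x : quadf M m c x = bl M x x + 2 * lin m x + c.
Proof. by []. Qed.

Lemma quadf2 N (M : 'M[R]_N) m c x0 x w s r : M^T = M ->
  quadf M m c (x0 + s *: x + r *: w) =
  quadf M m c x0 + 2 * s * (bl M x0 x + lin m x) + 2 * r * (bl M x0 w + lin m w)
  + s ^+ 2 * bl M x x + 2 * s * r * bl M x w + r ^+ 2 * bl M w w.
Proof.
move=> hM; rewrite !quadfE !(blDl, blDr, blZl, blZr, linD, linZ).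
rewrite (bl_sym _ x0 hM) (bl_sym _ x0 hM) (bl_sym _ x hM) (bl_sym w x hM).
ring.
Qed.
End Aux.

Section Aux2.
Variable R : realType.
Lemma sc_scalar (k : R) : sc (k%:M : 'M[R]_1) = k.
Proof. by rewrite /sc mxE. Qed.
Lemma sc_mulscl (k : R) (X : 'M[R]_1) : sc (k%:M *m X) = k * sc X.
Proof. by rewrite mul_scalar_mx scZ. Qed.
Lemma sc_mulscr (k : R) (X : 'M[R]_1) : sc (X *m k%:M) = k * sc X.
Proof. by rewrite mul_mx_scalar scZ. Qed.
Lemma lin_sym n (a x : 'cV[R]_n) : sc (x^T *m a) = lin a x.
Proof. by rewrite /lin -scT trmx_mul trmxK. Qed.

Lemma blk_form n (A' : 'M[R]_n) (a' : 'cV[R]_n) (k t : R) (x : 'cV[R]_n) :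
 sc ((col_mx x (t%:M))^T *m block_mx A' a' a'^T (k%:M) *m col_mx x (t%:M))
   = bl A' x x + 2 * t * lin a' x + k * t ^+ 2.
Proof.
rewrite tr_col_mx mul_row_block mul_row_col !mulmxDl !scD.
rewrite tr_scalar_mx -!mulmxA !sc_mulscl [x^T *m (a' *m _)]mulmxA sc_mulscr sc_scalar.
rewrite /bl /lin mulmxA lin_sym /lin; ring.
Qed.
End Aux2.

Section Fin.
Variable R : realType.

Lemma bl_exp N (M : 'M[R]_N) u w t : M^T = M ->
  bl M (u + t *: w) (u + t *: w) = bl M u u + 2 * t * bl M u w + t ^+ 2 * bl M w w.
Proof.
move=> hM; rewrite !(blDl, blDr, blZl, blZr) (bl_sym w u hM); ring.
Qed.

Lemma key2D N (P Q : 'M[R]_N) u w : P^T = P -> Q^T = Q ->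
  (forall z, bl Q z z = 0 -> 0 <= bl P z z) ->
  0 < bl Q u u -> bl Q w w < 0 ->
  - bl P u u / bl Q u u <= - bl P w w / bl Q w w.
Proof.
move=> hP hQ H.
set a0 := bl Q u u; set a1 := bl Q u w; set a2 := bl Q w w.
set p0 := bl P u u; set p1 := bl P u w; set p2 := bl P w w.
move=> a0p a2n.
have a2nz : a2 != 0 by rewrite lt_eqF.
have Dp : 0 <= a1 ^+ 2 - a0 * a2 by nra.
set sq := Num.sqrt (a1 ^+ 2 - a0 * a2).
have sq0 : 0 <= sq by rewrite sqrtr_ge0.
have sq2 : sq ^+ 2 = a1 ^+ 2 - a0 * a2 by rewrite sqr_sqrtr.
have root_of : forall r, a2 * r = - a1 + sq \/ a2 * r = - a1 - sq -> a0 + 2 * r * a1 + r ^+ 2 * a2 = 0.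
  move=> r hr.
  have : a2 * (a0 + 2 * r * a1 + r ^+ 2 * a2) = 0.
    have -> : a2 * (a0 + 2 * r * a1 + r ^+ 2 * a2) = a0 * a2 + 2 * a1 * (a2 * r) + (a2 * r) ^+ 2 by ring.
    by case: hr => ->; [have -> : a0 * a2 + 2 * a1 * (- a1 + sq) + (- a1 + sq) ^+ 2 = a0 * a2 - a1 ^+ 2 + sq ^+ 2 by ring
      | have -> : a0 * a2 + 2 * a1 * (- a1 - sq) + (- a1 - sq) ^+ 2 = a0 * a2 - a1 ^+ 2 + sq ^+ 2 by ring]; rewrite sq2; ring.
  by move/eqP; rewrite mulf_eq0 (negbTE a2nz) /= => /eqP.
set r1 := (- a1 + sq) / a2; set r2 := (- a1 - sq) / a2.
have e1 : a2 * r1 = - a1 + sq by rewrite /r1 mulrC divfK.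
have e2 : a2 * r2 = - a1 - sq by rewrite /r2 mulrC divfK.
have I1 : 0 <= p0 + 2 * r1 * p1 + r1 ^+ 2 * p2.
  have := H (u + r1 *: w); rewrite !bl_exp //; apply; apply: root_of; left; exact: e1.
have I2 : 0 <= p0 + 2 * r2 * p1 + r2 ^+ 2 * p2.
  have := H (u + r2 *: w); rewrite !bl_exp //; apply; apply: root_of; right; exact: e2.
have sqa1 : a1 < sq /\ - a1 < sq by split; nra.
have r1n : r1 < 0.
  have : 0 < a2 * r1 by rewrite e1; lra.
  nra.
have r2p : 0 < r2.
  have : a2 * r2 < 0 by rewrite e2; lra.
  nra.
have X : r1 * r2 * a2 = a0.
  apply: (mulfI a2nz).
  have -> : a2 * (r1 * r2 * a2) = (a2 * r1) * (a2 * r2) by ring.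
  rewrite e1 e2.
  have -> : (- a1 + sq) * (- a1 - sq) = a1 ^+ 2 - sq ^+ 2 by ring.
  rewrite sq2; ring.
have key : 0 <= (r2 - r1) * (p0 - r1 * r2 * p2).
  have -> : (r2 - r1) * (p0 - r1 * r2 * p2) =
     r2 * (p0 + 2 * r1 * p1 + r1 ^+ 2 * p2) + (- r1) * (p0 + 2 * r2 * p1 + r2 ^+ 2 * p2) by ring.
  apply: addr_ge0; apply: mulr_ge0 => //; lra.
have key2 : 0 <= p0 - r1 * r2 * p2.
  by move: key; rewrite pmulr_rge0 //; lra.
have Xe : r1 * r2 = a0 / a2 by rewrite -X mulfK.
rewrite Xe in key2.
have a0nz : a0 != 0 by rewrite gt_eqF.
rewrite -subr_ge0.
have -> : - p2 / a2 - (- p0 / a0) = (p0 - a0 / a2 * p2) / a0.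
  by field; rewrite a0nz a2nz.
by apply: divr_ge0 => //; exact: ltW.
Qed.

Lemma finsler N (P Q : 'M[R]_N) : P^T = P -> Q^T = Q ->
  (exists u, 0 < bl Q u u) -> (exists w, bl Q w w < 0) ->
  (forall z, bl Q z z = 0 -> 0 <= bl P z z) ->
  exists mu, forall z, 0 <= bl P z z + mu * bl Q z z.
Proof.
move=> hP hQ [u0 hu0] [w0 hw0] H.
pose S : set R := fun y => exists u, 0 < bl Q u u /\ y = - bl P u u / bl Q u u.
have ubw : forall w, bl Q w w < 0 -> ubound S (- bl P w w / bl Q w w).
  by move=> w hw y [u [hu ->]]; apply: key2D.
have hS : has_ubound S by exists (- bl P w0 w0 / bl Q w0 w0); exact: ubw.
have nS : nonempty S by exists (- bl P u0 u0 / bl Q u0 u0); exists u0.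
exists (sup S) => z.
have [qp|qn|q0] := ltgtP (bl Q z z) 0.
- have le := ge_sup nS (ubw z qp).
  have e : - bl P z z / bl Q z z * bl Q z z = - bl P z z by rewrite divfK // lt_eqF.
  nra.
- have le : - bl P z z / bl Q z z <= sup S by apply: ub_le_sup => //; exists z.
  have e : - bl P z z / bl Q z z * bl Q z z = - bl P z z by rewrite divfK // gt_eqF.
  nra.
- by rewrite q0 mulr0 addr0; apply: H.
Qed.
End Fin.

Section Dec.
Variable R : realType.

Lemma blk_form2 n (p : 'M[R]_1) (c : 'M[R]_(1, n)) (r : 'cV[R]_n) (M : 'M[R]_n) (t : R) (v : 'cV[R]_n) :
  bl (block_mx p c r M) (col_mx (t%:M) v) (col_mx (t%:M) v)
   = t ^+ 2 * p 0 0 + t * sc (c *m v) + t * lin r v + bl M v v.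
Proof.
rewrite /bl tr_col_mx mul_row_block mul_row_col !mulmxDl !scD.
rewrite tr_scalar_mx -!mulmxA !sc_mulscl [v^T *m (r *m _)]mulmxA sc_mulscr.
rewrite sc_mulscr lin_sym; rewrite /sc; have -> : p ord0 ord0 = p 0 0 by []. ring.
Qed.

Lemma lin_delta n (r : 'cV[R]_n) i : lin r (delta_mx i ord0) = r i ord0.
Proof.
rewrite /lin /sc !mxE (bigD1 i) //= big1 ?addr0; last first.
  by move=> j hj; rewrite !mxE (negbTE hj) mulr0.
by rewrite !mxE !eqxx mulr1.
Qed.

Lemma lin_bound (c k : R) : (forall t, 0 <= 2 * t * c + k) -> c = 0.
Proof.
move=> H; case: (eqVneq c 0) => // hc; exfalso.
have := H (- (`|k| + 1) / (2 * c)).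
have -> : 2 * (- (`|k| + 1) / (2 * c)) * c = - (`|k| + 1).
  by field; rewrite hc.
have := ler_norm k; lra.
Qed.


Lemma sc_mul11 (X Y : 'M[R]_1) : sc (X *m Y) = sc X * sc Y.
Proof. by rewrite /sc mxE big_ord1. Qed.

Lemma psd_step n (IH : forall M : 'M[R]_n, M^T = M -> (forall v, 0 <= bl M v v) ->
  exists V : 'M[R]_n, M = V *m V^T) (M : 'M[R]_(1 + n)) : M^T = M -> (forall v, 0 <= bl M v v) ->
  exists V : 'M[R]_(1 + n), M = V *m V^T.
Proof.
rewrite -[M]submxK.
set p := ulsubmx _; set c := ursubmx _; set r := dlsubmx _; set M' := drsubmx _.
move=> hs hp.
rewrite tr_block_mx in hs; have [hpT hrc hcr hM'] := eq_block_mx hs.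
have hp' : forall t v, 0 <= t ^+ 2 * p 0 0 + 2 * t * lin r v + bl M' v v.
  move=> t v; have := hp (col_mx (t%:M) v); rewrite blk_form2.
  by rewrite -hrc -/(lin r v); lra.
have psdM' : forall v, 0 <= bl M' v v.
  by move=> v; have := hp' 0 v; nra.
have pge0 : 0 <= p 0 0.
  have := hp' 1 0; rewrite /bl /lin !mulmx0 /sc !mxE expr1n mul1r; lra.
have [p0|ppos] := eqVneq (p 0 0) 0.
- have r0 : r = 0.
    apply/matrixP => i j; rewrite (ord1 j) [RHS]mxE -lin_delta.
    apply: (@lin_bound _ (bl M' (delta_mx i ord0) (delta_mx i ord0))) => t.
    by have := hp' t (delta_mx i ord0); rewrite p0 mulr0 add0r.
  have [W hW] := IH M' hM' psdM'.
  exists (block_mx (0 : 'M_1) 0 0 W).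
  rewrite tr_block_mx mulmx_block.
  rewrite !trmx0 !mulmx0 !mul0mx !addr0 !add0r -hW.
  rewrite -hrc r0 trmx0; congr block_mx.
  apply/matrixP => i j; rewrite (ord1 i) (ord1 j) [RHS]mxE; exact: p0.
- have pp : 0 < p 0 0 by rewrite lt_def ppos.
  set pi := p 0 0 in pp ppos pge0 hp'.
  set sq := Num.sqrt pi.
  have sqpos : 0 < sq by rewrite sqrtr_gt0.
  have sq2 : sq * sq = pi by rewrite -expr2 sqr_sqrtr // ltW.
  pose S := M' - pi^-1 *: (r *m r^T).
  have hS : S^T = S by rewrite /S linearB /= linearZ /= trmx_mul trmxK hM'.
  have psdS : forall v, 0 <= bl S v v.
    move=> v; have := hp' (- lin r v / pi) v.
    have -> : bl S v v = bl M' v v - pi^-1 * (lin r v) ^+ 2.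
      rewrite /S /bl mulmxDr mulmxDl scD mulmxN mulNmx scN.
      rewrite -scalemxAr -scalemxAl scZ.
      have -> : v^T *m (r *m r^T) *m v = (v^T *m r) *m (r^T *m v) by rewrite !mulmxA.
      rewrite sc_mul11 lin_sym -/(lin r v); ring.
    have -> : (- lin r v / pi) ^+ 2 * pi + 2 * (- lin r v / pi) * lin r v = - pi^-1 * (lin r v) ^+ 2.
      by field; rewrite ppos.
    lra.
  have [W hW] := IH S hS psdS.
  pose v0 : 'cV[R]_(1 + n) := col_mx (sq%:M) (sq^-1 *: r).
  exists (row_mx v0 (col_mx (0 : 'M_(1,n)) W)).
  rewrite tr_row_mx mul_row_col !tr_col_mx !mul_col_row !trmx0 !mulmx0 !mul0mx -hW.
  rewrite add_block_mx !addr0 tr_scalar_mx linearZ /=.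
  congr block_mx.
  + by rewrite -scalar_mxM sq2 /pi -mx11_scalar.
  + by rewrite mul_scalar_mx scalerA mulfV ?gt_eqF // scale1r hrc.
  + by rewrite mul_mx_scalar scalerA mulfV ?gt_eqF // scale1r.
  + by rewrite /S -scalemxAl -scalemxAr scalerA -invfM sq2 addrC subrK.
Qed.

Lemma psd_dec n (M : 'M[R]_n) : M^T = M -> (forall v, 0 <= bl M v v) ->
  exists V : 'M[R]_n, M = V *m V^T.
Proof.
elim: n M => [|n IH] M.
  by move=> _ _; exists 0; apply/matrixP => [[]].
move=> hs hp; have [V hV] := @psd_step n IH M hs hp; by exists V.
Qed.
End Dec.
Section Frob.
Variable R : realType.
Lemma frob_col n (B V : 'M[R]_n) :
  frob B (V *m V^T) = \sum_k bl B (col k V) (col k V).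
Proof.
rewrite /frob /bl /sc.
under eq_bigr => i _ do under eq_bigr => j _ do rewrite !mxE big_distrr /=.
under [RHS]eq_bigr => k _ do rewrite !mxE.
under [RHS]eq_bigr => k _ do under eq_bigr => j _ do rewrite !mxE big_distrl /=.
rewrite exchange_big /=.
under eq_bigr => j _ do rewrite exchange_big /=.
rewrite exchange_big /=.
apply: eq_bigr => k _; apply: eq_bigr => j _.
apply: eq_bigr => i _; rewrite !mxE; ring.
Qed.

Lemma frob_nsd n (B P : 'M[R]_n) : (forall v, bl B v v <= 0) -> P^T = P ->
  (forall v, 0 <= bl P v v) -> frob B P <= 0.
Proof.
move=> hB hs hp; have [V ->] := psd_dec hs hp.
rewrite frob_col; rewrite -oppr_ge0 -sumrN; apply: sumr_ge0 => k _.
by rewrite oppr_ge0.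
Qed.
End Frob.

Section H5.
Variable R : realType.

Lemma quadf1 N (M : 'M[R]_N) m c x0 x s : M^T = M ->
  quadf M m c (x0 + s *: x) =
  quadf M m c x0 + 2 * s * (bl M x0 x + lin m x) + s ^+ 2 * bl M x x.
Proof.
move=> hM; rewrite !quadfE !(blDl, blDr, blZl, blZr, linD, linZ).
rewrite (bl_sym x x0 hM); ring.
Qed.

Lemma quad_ub (a b c U : R) : (forall t, a * t ^+ 2 + b * t + c <= U) -> a <= 0.
Proof.
move=> H; rewrite leNgt; apply/negP => ha.
set K := `|b| + `|c - U| + 1.
have Kp : 0 < K by rewrite /K; have := normr_ge0 b; have := normr_ge0 (c - U); lra.
pose t := 1 + K / a.
have ht : a * t = a + K by rewrite /t mulrDr mulr1 mulrC divfK ?gt_eqF.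
have t1 : 1 <= t by rewrite /t lerDl divr_ge0 // ltW.
have := H t.
have h1 : - b <= `|b| by rewrite -normrN ler_norm.
have h2 : - (c - U) <= `|c - U| by rewrite -normrN ler_norm.
have e : a * t ^+ 2 + b * t + c - U = t * (a * t + b) + (c - U) by ring.
rewrite ht /K in e.
have h3 : 0 <= t * (b + `|b|) by apply: mulr_ge0; lra.
have h4 : t * (a + (`|b| + `|c - U| + 1) + b) >= a + `|c - U| + 1.
  have -> : t * (a + (`|b| + `|c - U| + 1) + b) = t * (b + `|b|) + t * (a + `|c - U| + 1) by ring.
  have : a + `|c - U| + 1 <= t * (a + `|c - U| + 1).
    by rewrite ler_peMl //; have := normr_ge0 (c - U); lra.
  lra.
lra.
Qed.

Lemma blMD N (M1 M2 : 'M[R]_N) u v : bl (M1 + M2) u v = bl M1 u v + bl M2 u v.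
Proof. by rewrite /bl mulmxDr mulmxDl scD. Qed.
Lemma blMZ N (M : 'M[R]_N) k u v : bl (k *: M) u v = k * bl M u v.
Proof. by rewrite /bl -scalemxAr -scalemxAl scZ. Qed.

Lemma frobB n (B X Y : 'M[R]_n) : frob B (X - Y) = frob B X - frob B Y.
Proof.
rewrite /frob -sumrB; apply: eq_bigr => i _; rewrite -sumrB; apply: eq_bigr => j _.
by rewrite !mxE mulrBr.
Qed.



Lemma frob_outer n (B : 'M[R]_n) u : frob B (u *m u^T) = bl B u u.
Proof.
rewrite /frob /bl /sc !mxE.
under eq_bigr => i _ do under eq_bigr => j _ do rewrite !mxE big_ord1 !mxE.
under [RHS]eq_bigr => j _ do rewrite !mxE big_distrl /=.
rewrite exchange_big /=; apply: eq_bigr => j _; apply: eq_bigr => i _.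
by rewrite !mxE; ring.
Qed.

Lemma frob_psd n (B P : 'M[R]_n) : (forall v, 0 <= bl B v v) -> P^T = P ->
  (forall v, 0 <= bl P v v) -> 0 <= frob B P.
Proof.
move=> hB hs hp; have [V ->] := psd_dec hs hp.
by rewrite frob_col; apply: sumr_ge0 => k _.
Qed.

Lemma pd_psd n (M : 'M[R]_n) : pd M -> M^T = M /\ forall v, 0 <= bl M v v.
Proof.
case=> hs hp; split => // v; case: (eqVneq v 0) => [->|hv].
  by rewrite /bl mulmx0 /sc mxE.
exact: ltW (hp v hv).
Qed.
End H5.

Section H6.
Variable R : realType.

Lemma quad_poly (e2 e1 e0 t : R) : (e2 *: 'X^2 + e1 *: 'X + e0%:P : {poly R}).[t] = e2 * t ^+ 2 + e1 * t + e0.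
Proof. by rewrite !hornerE. Qed.

Lemma ivt_h n (B : 'M[R]_n) b d y1 y2 v : B^T = B -> quadf B b d y1 <= v <= quadf B b d y2 ->
  exists y, quadf B b d y = v.
Proof.
move=> hB /andP [l1 l2].
set x := y2 - y1.
pose e2 := bl B x x; pose e1 := 2 * (bl B y1 x + lin b x); pose e0 := quadf B b d y1 - v.
have ev : forall t, quadf B b d (y1 + t *: x) - v = e2 * t ^+ 2 + e1 * t + e0.
  by move=> t; rewrite quadf1 // /e2 /e1 /e0; ring.
have hs : (e2 *: 'X^2 + e1 *: 'X + e0%:P : {poly R}).[0] <= 0 <= (e2 *: 'X^2 + e1 *: 'X + e0%:P : {poly R}).[1].
  rewrite !quad_poly -!ev.
  have -> : y1 + 0 *: x = y1 by rewrite scale0r addr0.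
  have -> : y1 + 1 *: x = y2 by rewrite scale1r /x addrC subrK.
  apply/andP; split; lra.
have [t _ ht] := poly_ivt ler01 hs.
exists (y1 + t *: x).
move: ht; rewrite /root quad_poly -ev => /eqP; lra.
Qed.
End H6.
Section H6b.
Variable R : realType.

Lemma nsd_of_ub n (B : 'M[R]_n) b d U : B^T = B -> (forall y, quadf B b d y <= U) ->
  forall v, bl B v v <= 0.
Proof.
move=> hB H v; apply: (@quad_ub _ _ (2 * (bl B 0 v + lin b v)) (quadf B b d 0) U) => t.
have := H (0 + t *: v); rewrite quadf1 //; lra.
Qed.

Lemma psd_of_lb n (B : 'M[R]_n) b d U : B^T = B -> (forall y, U <= quadf B b d y) ->
  forall v, 0 <= bl B v v.
Proof.
move=> hB H v; rewrite -oppr_le0.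
apply: (@quad_ub _ _ (- (2 * (bl B 0 v + lin b v))) (- quadf B b d 0) (- U)) => t.
have := H (0 + t *: v); rewrite quadf1 //; lra.
Qed.

Lemma slater_interior n (B : 'M[R]_n) (b : 'cV[R]_n) d alpha beta : B^T = B ->
  (exists (xh : 'cV[R]_n) (Xh : 'M[R]_n),
      Xh^T = Xh /\ pd (Xh - xh *m xh^T) /\
      alpha < frob B Xh + 2 * sc (b^T *m xh) + d < beta) ->
  exists y, alpha < quadf B b d y < beta.
Proof.
move=> hB [xh [Xh [hs [hpd /andP [h1 h2]]]]].
have [Ps Pp] := pd_psd hpd.
have val : frob B Xh + 2 * sc (b^T *m xh) + d = quadf B b d xh + frob B (Xh - xh *m xh^T).
  by rewrite frobB frob_outer quadfE /lin; ring.
rewrite val in h1 h2.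
apply: NNPP => hn.
have H : forall y, quadf B b d y <= alpha \/ beta <= quadf B b d y.
  move=> y; case: (lerP (quadf B b d y) alpha) => ha; first by left.
  case: (lerP beta (quadf B b d y)) => hb; first by right.
  by exfalso; apply: hn; exists y; rewrite ha hb.
case: (classic (exists y1, quadf B b d y1 <= alpha)) => [[y1 hy1]|n1].
  case: (classic (exists y2, beta <= quadf B b d y2)) => [[y2 hy2]|n2].
    have [y hy] := @ivt_h _ _ B b d y1 y2 ((alpha + beta) / 2) hB
        (ltac:(apply/andP; split; lra)).
    by case: (H y); rewrite hy; lra.
  have hall : forall y, quadf B b d y <= alpha.
    move=> y; case: (H y) => // hb; exfalso; apply: n2; by exists y.
  have nsd := nsd_of_ub hB hall.
  have := frob_nsd nsd Ps Pp; have := hall xh; lra.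
have hall : forall y, beta <= quadf B b d y.
  move=> y; case: (H y) => // ha; exfalso; apply: n1; by exists y.
have psdB := psd_of_lb hB hall.
have := frob_psd psdB Ps Pp; have := hall xh; lra.
Qed.
End H6b.

Section H7.
Variable R : realType.

Lemma bl_delta n (B : 'M[R]_n) i j : bl B (delta_mx i ord0) (delta_mx j ord0) = B i j.
Proof. by rewrite /bl trmx_delta -rowE -colE /sc !mxE. Qed.

Lemma nonzero_form n (B : 'M[R]_n) : B^T = B -> B != 0 -> exists w, bl B w w != 0.
Proof.
move=> hB hn; apply: NNPP => hc.
have h0 : forall w, bl B w w = 0.
  by move=> w; apply/eqP; apply: negbNE; apply/negP => hw; apply: hc; exists w.
move/eqP: hn; apply; apply/matrixP => i j; rewrite mxE -bl_delta.
have := h0 (delta_mx i ord0 + delta_mx j ord0).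
rewrite !(blDl, blDr) (h0 (delta_mx i ord0)) (h0 (delta_mx j ord0)) (bl_sym (delta_mx j ord0) _ hB).
lra.
Qed.
End H7.
Section H7b.
Variable R : realType.
Lemma level_choice n (B : 'M[R]_n) b d alpha beta y w : B^T = B -> bl B w w != 0 ->
  alpha < quadf B b d y < beta ->
  exists m x1 x2, [/\ alpha <= m <= beta, quadf B b d x2 < m & m < quadf B b d x1].
Proof.
move=> hB hw /andP [ya yb].
set h := quadf B b d in ya yb *.
have nc : exists x, h x != h y.
  apply: NNPP => hc.
  have e : forall x, h x = h y.
    by move=> x; apply/eqP; apply: negbNE; apply/negP => hx; apply: hc; exists x.
  have := e (y + 1 *: w); have := e (y + (-1) *: w); rewrite /h !quadf1 //.
  move: hw; set k := bl B w w => hw e1 e2.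
  have : k = 0 by lra.
  by move/eqP; rewrite (negbTE hw).
have [x hx] := nc.
case: (classic (exists x2, h x2 < h y)) => [[x2 hx2]|n2].
  case: (classic (exists x1, h y < h x1)) => [[x1 hx1]|n1].
    by exists (h y), x1, x2; split => //; apply/andP; split; apply: ltW.
  exists ((h y + Num.max (h x2) alpha) / 2), y, x2.
  have : h x2 <= Num.max (h x2) alpha by rewrite le_max lexx.
  have : alpha <= Num.max (h x2) alpha by rewrite le_max lexx orbT.
  have : Num.max (h x2) alpha < h y by rewrite gt_max hx2 ya.
  move=> h1 h2 h3; split; [apply/andP; split|..]; lra.
have x1p : h y < h x.
  case: (ltgtP (h y) (h x)) => // [hl|he].
    by exfalso; apply: n2; exists x.
  by move: hx; rewrite he eqxx.
exists ((h y + Num.min (h x) beta) / 2), x, y.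
have : Num.min (h x) beta <= h x by rewrite ge_min lexx.
have : Num.min (h x) beta <= beta by rewrite ge_min lexx orbT.
have : h y < Num.min (h x) beta by rewrite lt_min x1p yb.
move=> h1 h2 h3; split; [apply/andP; split|..]; lra.
Qed.
End H7b.

Section H8.
Variable R : realType.

Lemma nK (x : R) : `|x| ^+ 2 = x ^+ 2.
Proof. by rewrite real_normK // num_real. Qed.

Lemma absb (x : R) : - `|x| <= x <= `|x|.
Proof. by rewrite -ler_norml. Qed.

Lemma arith (f0 lA lAw k kA wA c1 L s r : R) : k < 0 -> 0 <= c1 ->
  let K := `|f0| + 2 * `|lA| + 2 * (1 + c1) * `|lAw| + 2 * (1 + c1) * `|kA| + c1 * `|wA| in
  let T := 1 + (K + `|L|) / (- k) in
  `|s| = T ^+ 2 -> r ^+ 2 <= c1 * T ^+ 2 ->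
  L <= f0 + 2 * s * lA + 2 * r * lAw + s ^+ 2 * k + 2 * s * r * kA + r ^+ 2 * wA -> False.
Proof.
move=> kn c1p K T hs hr hL.
have Kp : 0 <= K by rewrite /K; have := normr_ge0 f0; have := normr_ge0 lA;
  have := normr_ge0 lAw; have := normr_ge0 kA; have := normr_ge0 wA; nra.
have T1 : 1 <= T by rewrite /T lerDl divr_ge0 //; [have := normr_ge0 L; lra | lra].
have Tk : T * k = k - (K + `|L|).
  rewrite /T mulrDl mul1r; have knz : k != 0 by rewrite lt_eqF.
  have -> : (K + `|L|) / - k * k = - (K + `|L|) by field.
  ring.
have T0 : 0 <= T by lra.
have T2 : 1 <= T ^+ 2 by nra.
have T13 : T <= T ^+ 3.
  have -> : T ^+ 3 = T + T * (T ^+ 2 - 1) by ring.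
  rewrite lerDl; apply: mulr_ge0; lra.
have T23 : T ^+ 2 <= T ^+ 3.
  have -> : T ^+ 3 = T ^+ 2 + T ^+ 2 * (T - 1) by ring.
  rewrite lerDl; apply: mulr_ge0; lra.
have T3 : 1 <= T ^+ 3 by lra.
have ra : `|r| <= (1 + c1) * T.
  rewrite leNgt; apply/negP => hlt.
  have h0 := normr_ge0 r.
  have : ((1 + c1) * T) ^+ 2 < `|r| ^+ 2.
    by rewrite ltr_pXn2r // ?nnegrE //; nra.
  rewrite nK; nra.
have e1 : f0 <= `|f0| * T ^+ 3 by have := absb f0; nra.
have e2 : 2 * s * lA <= 2 * `|lA| * T ^+ 3.
  have : 2 * s * lA <= 2 * `|s * lA| by have := absb (s * lA); lra.
  rewrite normrM hs; have := normr_ge0 lA;   nra.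
have e3 : 2 * r * lAw <= 2 * (1 + c1) * `|lAw| * T ^+ 3.
  have : 2 * r * lAw <= 2 * (`|r| * `|lAw|) by rewrite -normrM; have := absb (r * lAw); lra.
  have c1' : 0 <= 1 + c1 by lra.
  have rT : `|r| <= (1 + c1) * T ^+ 3 := le_trans ra (ler_wpM2l c1' T13).
  have := ler_wpM2r (normr_ge0 lAw) rT; lra.
have e4 : 2 * s * r * kA <= 2 * (1 + c1) * `|kA| * T ^+ 3.
  have : 2 * s * r * kA <= 2 * (`|s| * `|r| * `|kA|) by rewrite -!normrM; have := absb (s * r * kA); lra.
  rewrite hs.
  have c1' : 0 <= 1 + c1 by lra.
  have : T ^+ 2 * `|r| <= T ^+ 2 * ((1 + c1) * T) by apply: ler_wpM2l => //; lra.
  move/(ler_wpM2r (normr_ge0 kA)).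
  have -> : T ^+ 2 * ((1 + c1) * T) = (1 + c1) * T ^+ 3 by ring.
  lra.
have e5 : r ^+ 2 * wA <= c1 * `|wA| * T ^+ 3.
  have : r ^+ 2 * wA <= r ^+ 2 * `|wA| by have := absb wA; have := sqr_ge0 r; nra.
  have : r ^+ 2 <= c1 * T ^+ 3.
    by apply: (le_trans hr); apply: ler_wpM2l.
  move/(ler_wpM2r (normr_ge0 wA)); lra.
have e6 : s ^+ 2 = T ^+ 4 by rewrite -nK hs -exprM.
have sum : L <= K * T ^+ 3 + k * T ^+ 4.
  rewrite e6 in hL; rewrite /K; lra.
have : K * T ^+ 3 + k * T ^+ 4 = T ^+ 3 * (T * k + K) by ring.
rewrite Tk => e.
have := normr_ge0 L; have := absb L; nra.
Qed.
End H8.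

Section H9.
Variable R : realType.

Lemma quad_root (bw p q : R) : bw != 0 -> bw * q <= 0 ->
  exists r, bw * r ^+ 2 + 2 * p * r + q = 0 /\ r ^+ 2 * `|bw| <= `|q|.
Proof.
move=> hb hq.
have D0 : 0 <= p ^+ 2 - bw * q by have := sqr_ge0 p; lra.
set sq := Num.sqrt (p ^+ 2 - bw * q).
have sq2 : sq ^+ 2 = p ^+ 2 - bw * q by rewrite sqr_sqrtr.
set r1 := (- p + sq) / bw; set r2 := (- p - sq) / bw.
have e1 : bw * r1 = - p + sq by rewrite /r1 mulrC divfK.
have e2 : bw * r2 = - p - sq by rewrite /r2 mulrC divfK.
have isroot : forall r, bw * r = - p + sq \/ bw * r = - p - sq -> bw * r ^+ 2 + 2 * p * r + q = 0.
  move=> r hr; apply: (mulfI hb); rewrite mulr0.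
  have -> : bw * (bw * r ^+ 2 + 2 * p * r + q) = (bw * r) ^+ 2 + 2 * p * (bw * r) + bw * q by ring.
  case: hr => ->.
    have -> : (- p + sq) ^+ 2 + 2 * p * (- p + sq) + bw * q = sq ^+ 2 - p ^+ 2 + bw * q by ring.
    by rewrite sq2; ring.
  have -> : (- p - sq) ^+ 2 + 2 * p * (- p - sq) + bw * q = sq ^+ 2 - p ^+ 2 + bw * q by ring.
  by rewrite sq2; ring.
have prod : r1 * r2 * bw = q.
  apply: (mulfI hb).
  have -> : bw * (r1 * r2 * bw) = (bw * r1) * (bw * r2) by ring.
  rewrite e1 e2.
  have -> : (- p + sq) * (- p - sq) = p ^+ 2 - sq ^+ 2 by ring.
  by rewrite sq2; ring.
have hq' : `|r1| * `|r2| * `|bw| = `|q| by rewrite -!normrM prod.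
have hbn := normr_ge0 bw.
case: (lerP `|r1| `|r2|) => hl.
  exists r1; split; first by apply: isroot; left.
  rewrite -nK -hq' expr2; apply: ler_wpM2r => //; apply: ler_wpM2l => //.
exists r2; split; first by apply: isroot; right.
rewrite -nK -hq' expr2 [`|r1| * _]mulrC; apply: ler_wpM2r => //; apply: ler_wpM2l => //.
exact: ltW.
Qed.
End H9.
Section H9b.
Variable R : realType.
Lemma t0 n (A B : 'M[R]_n) a b c d alpha beta L x0 w x :
  A^T = A -> B^T = B ->
  (forall y, alpha <= quadf B b d y <= beta -> L <= quadf A a c y) ->
  alpha <= quadf B b d x0 <= beta -> bl B w w != 0 -> bl B x x = 0 ->
  0 <= bl A x x.
Proof.
move=> hA hB Hf hx0 hw hx.
rewrite leNgt; apply/negP => kn.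
set l := bl B x0 x + lin b x; set lw := bl B x0 w + lin b w.
set kap := bl B x w; set bw := bl B w w.
have feas : forall s r, bw * r ^+ 2 + 2 * (lw + s * kap) * r + 2 * s * l = 0 ->
    L <= quadf A a c (x0 + s *: x + r *: w).
  move=> s r hr; apply: Hf.
  rewrite quadf2 // hx.
  have -> : quadf B b d x0 + 2 * s * (bl B x0 x + lin b x) + 2 * r * (bl B x0 w + lin b w) +
      s ^+ 2 * 0 + 2 * s * r * bl B x w + r ^+ 2 * bl B w w
      = quadf B b d x0 + (bw * r ^+ 2 + 2 * (lw + s * kap) * r + 2 * s * l) by rewrite /bw /lw /kap /l; ring.
  by rewrite hr addr0.
pose eps : R := if 0 <= l * bw then -1 else 1.
have heps : eps * l * bw <= 0 /\ `|eps| = 1.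
  rewrite /eps; case: (lerP 0 (l * bw)) => h.
    split; first by rewrite -mulrA mulN1r oppr_le0.
    by rewrite normrN normr1.
  split; last by rewrite normr1.
  by rewrite -mulrA mul1r ltW.
set f0 := quadf A a c x0.
set lA := bl A x0 x + lin a x; set lAw := bl A x0 w + lin a w.
set kA := bl A x w; set wA := bl A w w; set k := bl A x x in kn.
set c1 := 2 * `|l| / `|bw|.
have bwp : 0 < `|bw| by rewrite normr_gt0.
have c1p : 0 <= c1 by rewrite /c1 divr_ge0 // mulr_ge0 // normr_ge0.
set K := `|f0| + 2 * `|lA| + 2 * (1 + c1) * `|lAw| + 2 * (1 + c1) * `|kA| + c1 * `|wA|.
set T := 1 + (K + `|L|) / (- k).
pose s := eps * T ^+ 2.
have hs : `|s| = T ^+ 2.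
  rewrite /s normrM (proj2 heps) mul1r ger0_norm //; exact: sqr_ge0.
have sgn : bw * (2 * s * l) <= 0.
  have -> : bw * (2 * s * l) = 2 * T ^+ 2 * (eps * l * bw) by rewrite /s; ring.
  apply: mulr_ge0_le0; last exact: (proj1 heps).
  by apply: mulr_ge0 => //; exact: sqr_ge0.
have [r [hr hrb]] := @quad_root _ bw (lw + s * kap) (2 * s * l) hw sgn.
have hL := feas s r hr.
rewrite quadf2 // -/f0 -/lA -/lAw -/kA -/wA -/k in hL.
apply: (@arith _ f0 lA lAw k kA wA c1 L s r kn c1p hs) => //.
have : r ^+ 2 * `|bw| <= 2 * `|l| * T ^+ 2.
  by move: hrb; rewrite (normrM (2 * s) l) (normrM 2 s) hs ger0_norm //; lra.
rewrite /c1 => h2.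
rewrite -(ler_pM2r bwp); apply: (le_trans h2).
have -> : 2 * `|l| / `|bw| * T ^+ 2 * `|bw| = 2 * `|l| * T ^+ 2 by field; rewrite gt_eqF.
by [].
Qed.
End H9b.

Section H10.
Variable R : realType.

Lemma hom_id n (M : 'M[R]_n) m k L x t : t != 0 ->
  bl M x x + 2 * t * lin m x + (k - L) * t ^+ 2 = t ^+ 2 * (quadf M m k (t^-1 *: x) - L).
Proof.
move=> ht; rewrite quadfE blZl blZr linZ; field; exact: ht.
Qed.

Lemma zform n (M : 'M[R]_n) (v : 'cV[R]_n) k (z : 'cV[R]_(n + 1)) :
  bl (block_mx M v v^T k%:M) z z =
  bl M (usubmx z) (usubmx z) + 2 * dsubmx z 0 0 * lin v (usubmx z) + k * dsubmx z 0 0 ^+ 2.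
Proof.
have hz : z = col_mx (usubmx z) ((dsubmx z 0 0)%:M) by rewrite -mx11_scalar vsubmxK.
rewrite [in LHS]hz; exact: blk_form.
Qed.

Lemma zform1 n (M : 'M[R]_n) (v : 'cV[R]_n) k (x : 'cV[R]_n) :
  bl (block_mx M v v^T k%:M) (col_mx x 1%:M) (col_mx x 1%:M) = quadf M v k x.
Proof.
rewrite zform col_mxKu col_mxKd mxE eqxx /= quadfE; ring.
Qed.

Lemma blk_sym n (M : 'M[R]_n) (v : 'cV[R]_n) k : M^T = M ->
  (block_mx M v v^T k%:M)^T = block_mx M v v^T k%:M.
Proof. by move=> hM; rewrite tr_block_mx trmxK tr_scalar_mx hM. Qed.
End H10.


Lemma dualmxE (R : realType) (n : nat) (A B : 'M[R]_n) (a b : 'cV[R]_n) mu s :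
  dualmx A B a b mu s = block_mx (A + mu *: B) (a + mu *: b) (a + mu *: b)^T (s%:M).
Proof. by rewrite /dualmx linearD linearZ. Qed.

Lemma linDl (R : realType) n (a b x : 'cV[R]_n) : lin (a + b) x = lin a x + lin b x.
Proof. by rewrite /lin linearD /= mulmxDl scD. Qed.
Lemma linZl (R : realType) n (a x : 'cV[R]_n) k : lin (k *: a) x = k * lin a x.
Proof. by rewrite /lin linearZ /= -scalemxAl scZ. Qed.

Theorem corollary1 (R : realType) (n : nat) (A B : 'M[R]_n) (a b : 'cV[R]_n)
  (c d alpha beta : R) :
  A^T = A -> B^T = B -> alpha <= beta -> B != 0 ->
  (exists (xh : 'cV[R]_n) (Xh : 'M[R]_n),
      Xh^T = Xh /\ pd (Xh - xh *m xh^T) /\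
      alpha < frob B Xh + 2 * sc (b^T *m xh) + d < beta) ->
  ((exists L : R, forall x : 'cV[R]_n,
       alpha <= quadf B b d x <= beta -> L <= quadf A a c x)
   <->
   (exists mu s : R, psd (dualmx A B a b mu s))).
Proof.
move=> hA hB hab hBnz hsl; split.
- case=> L Hf.
  have [y hy] := slater_interior hB hsl.
  have [w hw] := nonzero_form hB hBnz.
  have [m [x1 [x2 [hm h2 h1]]]] := level_choice hB hw hy.
  have hy' : alpha <= quadf B b d y <= beta by case/andP: hy => ? ?; apply/andP; split; apply: ltW.
  pose P := block_mx A a a^T ((c - L)%:M).
  pose Q := block_mx B b b^T ((d - m)%:M).
  have hP : P^T = P by exact: blk_sym.
  have hQ : Q^T = Q by exact: blk_sym.
  have H : forall z, bl Q z z = 0 -> 0 <= bl P z z.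
    move=> z; rewrite !zform; set x := usubmx z; set t := dsubmx z 0 0.
    case: (eqVneq t 0) => [t0'|tn].
      have e : forall u v k : R, u + 2 * 0 * v + k * 0 ^+ 2 = u by move=> *; ring.
      rewrite t0' !e => hq.
      exact: (t0 hA hB Hf hy' hw hq).
    rewrite (hom_id _ _ _ _ _ tn) (hom_id _ _ _ _ _ tn) => hq.
    have t2 : t ^+ 2 != 0 by rewrite sqrf_eq0.
    move/eqP: hq; rewrite mulf_eq0 (negbTE t2) /= subr_eq0 => /eqP hq.
    apply: mulr_ge0; first exact: sqr_ge0.
    rewrite subr_ge0; apply: Hf; by rewrite hq.
  have q1 : 0 < bl Q (col_mx x1 1%:M) (col_mx x1 1%:M) by rewrite /Q zform1 !quadfE; move: h1 h2; rewrite !quadfE; lra.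
  have q2 : bl Q (col_mx x2 1%:M) (col_mx x2 1%:M) < 0 by rewrite /Q zform1 !quadfE; move: h1 h2; rewrite !quadfE; lra.
  have [mu hmu] := finsler hP hQ (ex_intro (fun u => 0 < bl Q u u) _ q1) (ex_intro (fun u => bl Q u u < 0) _ q2) H.
  exists mu, (c - L + mu * (d - m)).
  have -> : dualmx A B a b mu (c - L + mu * (d - m)) = P + mu *: Q.
    rewrite /P /Q scale_block_mx add_block_mx /dualmx; congr block_mx.
    by rewrite raddfD /= scale_scalar_mx.
  split.
    by rewrite linearD linearZ /= hP hQ.
  by move=> v; rewrite -/(bl _ v v) blMD blMZ.
- case=> mu [s [hs hp]].
  exists (c + mu * d - s - `|mu| * (`|alpha| + `|beta|)) => x /andP [l1 l2].
  have := hp (col_mx x 1%:M); rewrite -/(bl _ _ _) dualmxE zform1 !quadfE.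
  rewrite blMD blMZ linDl linZl.
  have : mu * quadf B b d x <= `|mu| * (`|alpha| + `|beta|).
    have := absb alpha; have := absb beta; have := absb mu.
    case: (lerP 0 mu) => hm.
      rewrite ger0_norm //; nra.
    rewrite ltr0_norm //; nra.
  rewrite quadfE; lra.
Qed.
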